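(* Let $U=\{u_1,\dots,u_{3n}\}$ with $n\ge1$ and let $\mathcal{S}=\{S_1,\dots,S_p\}$, $p\ge 1$, be a family of $3$-element subsets of $U$. Fix an integer $m\ge 6n+3p$. Build the labeled complete bipartite graph $G$ with partite sets $V_1=\{x_1,\dots,x_{3n}\}\cup\{x(S_1),\dots,x(S_p)\}$ and $V_2=\{y_1,\dots,y_{3n}\}\cup\{y_k(S_i):1\le i\le p,\,1\le k\le m\}\cup\{z_1,\dots,z_{3n}\}$, with labels: $x_iy_j$ is $+$ iff $i=j$ or $u_i,u_j$ lie in a common member of $\mathcal{S}$; $x(S_i)y_k(S_\ell)$ is $+$ iff $i=\ell$; $x_iy_k(S_j)$ and $x(S_j)y_i$ are $+$ iff $u_i\in S_j$; $x_iz_j$ is $+$ for all $i,j$; $x(S_i)z_j$ is $-$ for all $i,j$. Assign tolerances $t_{x(S_i)}=3$ and $t_{x_i}=m(d(u_i)-1)+(c(u_i)-2)+(3n-3)$, where $d(u_i)$ is the number of members of $\mathcal{S}$ containing $u_i$ and $c(u_i)$ is the number of $u_j\in U\setminus\{u_i\}$ lying in a common member of $\mathcal{S}$ with $u_i$. Then $G$ has a clustering in which each $v\in V_1$ has at most $t_v$ incident errors if and only if there is a subfamily $\mathcal{S}'\subseteq\mathcal{S}$ such that each element of $U$ lies in exactly one member of $\mathcal{S}'$.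
   Context: A clustering is a partition of $V(G)$. An error at a vertex $v$ is an incident edge that is a $+$ edge between different clusters or a $-$ edge within a cluster. *)

(* Defs.v *)
From HB Require Import structures.
From mathcomp Require Import all_boot all_order all_algebra.
Set Implicit Arguments. Unset Strict Implicit. Unset Printing Implicit Defensive.
Import Order.TTheory GRing.Theory Num.Theory.

(* Universe U = {u_0,...,u_{3n-1}} is 'I_(3*n); the family is S : 'I_p -> {set 'I_(3*n)}. *)

(* V1 = {x_i} + {x(S_i)} *)
Definition V1 (n p : nat) : finType := ('I_(3 * n) + 'I_p)%type.
(* V2 = {y_j} + {y_k(S_l)} (pair (l,k)) + {z_j} *)
Definition V2 (n p m : nat) : finType := ('I_(3 * n) + ('I_p * 'I_m) + 'I_(3 * n))%type.
Definition Vx (n p m : nat) : finType := (V1 n p + V2 n p m)%type.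

Definition plus_edge (n p m : nat) (S : 'I_p -> {set 'I_(3 * n)})
    (x : V1 n p) (y : V2 n p m) : bool :=
  match x, y with
  | inl i, inl (inl j) => (i == j) || [exists l, (i \in S l) && (j \in S l)]
  | inl i, inl (inr (j, _)) => i \in S j
  | inl _, inr _ => true
  | inr i, inl (inl j) => j \in S i
  | inr i, inl (inr (l, _)) => i == l
  | inr _, inr _ => false
  end.

(* number of errors at x in V1 for the clustering (partition) P of V(G);
   G is complete bipartite, so the edges at x are exactly x y, y in V2 *)
Definition errors_at (n p m : nat) (S : 'I_p -> {set 'I_(3 * n)})
    (P : {set {set Vx n p m}}) (x : V1 n p) : nat :=
  #|[set y : V2 n p m |
      if @plus_edge n p m S x y
      then pblock P (inl x : Vx n p m) != pblock P (inr y)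
      else pblock P (inl x : Vx n p m) == pblock P (inr y)]|.

Definition deg (n p : nat) (S : 'I_p -> {set 'I_(3 * n)}) (u : 'I_(3 * n)) : nat :=
  #|[set j | u \in S j]|.

Definition cnb (n p : nat) (S : 'I_p -> {set 'I_(3 * n)}) (u : 'I_(3 * n)) : nat :=
  #|[set v | (v != u) && [exists j, (u \in S j) && (v \in S j)]]|.

Definition tol (n p m : nat) (S : 'I_p -> {set 'I_(3 * n)}) (x : V1 n p) : int :=
  match x with
  | inl i => (m%:Z * ((deg S i)%:Z - 1) + ((cnb S i)%:Z - 2) + ((3 * n)%:Z - 3))%R
  | inr _ => 3%:Z
  end.

(* Main.v *)
Require Import Defs.
From HB Require Import structures.
From mathcomp Require Import all_boot all_order all_algebra.
From mathcomp Require Import zify.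
Set Implicit Arguments. Unset Strict Implicit. Unset Printing Implicit Defensive.
Import Order.TTheory GRing.Theory Num.Theory.

Lemma card_sumT (A B : finType) (X : pred (A + B)%type) :
  #|[set x | X x]| = #|[set a | X (inl a)]| + #|[set b | X (inr b)]|.
Proof. by rewrite -!sum1dep_card big_sumType. Qed.

Lemma card_pairT (I J : finType) (X : pred (I * J)%type) :
  #|[set x | X x]| = \sum_i #|[set k | X (i, k)]|.
Proof.
rewrite -sum1dep_card (eq_bigr (fun i => \sum_(k | X (i,k)) 1)); last by move=> i _; rewrite sum1dep_card.
by rewrite pair_big_dep; apply: eq_bigl => -[i k].
Qed.

Lemma card_pairC (I J : finType) (Q : pred I) :
  #|[set x : I * J | Q x.1]| = #|[set i | Q i]| * #|J|.
Proof.
have -> : [set x : I * J | Q x.1] = setX [set i | Q i] [set: J].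
  by apply/setP => -[i j]; rewrite !inE andbT.
by rewrite cardsX cardsT.
Qed.

Lemma pblock_preim (T rT : finType) (f : T -> rT) (x y : T) :
  (pblock (preim_partition f [set: T]) x == pblock (preim_partition f [set: T]) y) = (f x == f y).
Proof.
have hP := preim_partitionP f [set: T].
case/and3P: (hP) => /eqP hc htr _.
rewrite eq_pblock // ?hc ?inE //.
rewrite pblock_equivalence_partition ?inE // .
by move=> x0 y0 z _ _ _; split=> // /eqP ->.
Qed.

Section Common.
Variables (n p m : nat) (S : 'I_p -> {set 'I_(3 * n)}).
Hypothesis hS : forall i, #|S i| = 3.

Definition yv (b : 'I_(3*n)) : V2 n p m := inl (inl b).
Definition ykv (j : 'I_p) (k : 'I_m) : V2 n p m := inl (inr (j, k)).
Definition zv (b : 'I_(3*n)) : V2 n p m := inr b.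

Lemma card_V2 (X : pred (V2 n p m)) : #|[set y | X y]| =
  #|[set b | X (yv b)]| + #|[set q | X (inl (inr q))]| + #|[set b | X (zv b)]|.
Proof.
rewrite (@card_sumT ('I_(3 * n) + ('I_p * 'I_m))%type 'I_(3*n) X).
by rewrite (@card_sumT 'I_(3 * n) ('I_p * 'I_m)%type (fun u => X (inl u))).
Qed.

Definition Pl (x : V1 n p) := [set y : V2 n p m | plus_edge S x y].

Lemma Ycard a : #|[set b | (a == b) || [exists l, (a \in S l) && (b \in S l)]]| = (cnb S a).+1.
Proof.
rewrite /cnb.
have -> : [set b | (a == b) || [exists l, (a \in S l) && (b \in S l)]] =
   a |: [set v | (v != a) && [exists j, (a \in S j) && (v \in S j)]].
  apply/setP => b; rewrite !inE eq_sym; by case: (b == a).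
by rewrite cardsU1 !inE eqxx.
Qed.

Lemma cardPa a : #|Pl (inl a)| = (cnb S a).+1 + deg S a * m + 3 * n.
Proof.
rewrite /Pl card_V2 /= Ycard.
rewrite (_ : [set b | true] = [set: 'I_(3*n)]); last by apply/setP=> b; rewrite !inE.
rewrite cardsT card_ord; congr (_ + _ + _).
rewrite (_ : [set q | _] = [set q : 'I_p * 'I_m | a \in S q.1]); last by apply/setP => -[j k]; rewrite !inE.
by rewrite (@card_pairC _ _ (fun l => a \in S l)) card_ord.
Qed.

Lemma cardQ j : #|Pl (inr j)| = 3 + m.
Proof.
rewrite /Pl card_V2 /=.
rewrite (_ : [set b | b \in S j] = S j); last by apply/setP=> b; rewrite !inE.
rewrite (_ : [set q | _] = [set q : 'I_p * 'I_m | j == q.1]); last by apply/setP => -[l k]; rewrite !inE.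
rewrite hS (@card_pairC _ _ (fun l => j == l)) card_ord.
rewrite (_ : [set l | j == l] = [set j]); last by apply/setP=> l; rewrite !inE eq_sym.
rewrite cards1 (_ : [set b : 'I_(3*n) | false] = set0) ?cards0 ?addn0 ?mul1n //.
Qed.

End Common.
Section Fwd.
Variables (n p m : nat) (S : 'I_p -> {set 'I_(3 * n)}).
Hypothesis hS : forall i, #|S i| = 3.
Variable T : {set 'I_p}.
Hypothesis hT : forall u, #|[set j in T | u \in S j]| = 1.

Definition jf (a : 'I_(3*n)) := [pick j | (j \in T) && (a \in S j)].

Lemma jfP a j : (jf a == Some j) = (j \in T) && (a \in S j).
Proof.
have /eqP/cards1P [j0 hj0] := hT a.
have key : forall j, ((j \in T) && (a \in S j)) = (j == j0).
  by move=> j'; move/setP: hj0 => /(_ j'); rewrite !inE.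
rewrite /jf key; case: pickP => [j' hj'|hn].
  by rewrite key in hj'; rewrite (eqP hj') /= eq_sym.
by have := hn j0; rewrite key eqxx.
Qed.

Lemma jf_some a : exists2 j, jf a = Some j & (j \in T) && (a \in S j).
Proof.
case e: (jf a) => [j|]; first by exists j => //; rewrite -jfP e.
have /eqP/cards1P [j0 hj0] := hT a.
have : j0 \in [set j in T | a \in S j] by rewrite hj0 inE.
rewrite inE -jfP e //.
Qed.

Definition flab (v : Vx n p m) : option 'I_p :=
  match v with
  | inl (inl a) => jf a
  | inl (inr j) => Some j
  | inr (inl (inl b)) => jf b
  | inr (inl (inr q)) => Some q.1
  | inr (inr b) => jf b
  end.

Lemma fwd_err x : ((errors_at S (preim_partition flab [set: Vx n p m]) x)%:Z <= @tol n p m S x)%R.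
Proof.
rewrite /errors_at.
rewrite (_ : #|_| = #|[set y : V2 n p m | if plus_edge S x y then flab (inl x) != flab (inr y)
                   else flab (inl x) == flab (inr y)]|); last first.
  by apply: eq_card => y; rewrite !inE !pblock_preim.
rewrite card_V2 /=.
case: x => [a|j] /=.
- have [j0 hj0 /andP [hT0 ha0]] := jf_some a.
  rewrite hj0.
  set Y := [set b | (a == b) || [exists l, (a \in S l) && (b \in S l)]].
  have sY : S j0 \subset Y.
    apply/subsetP => b hb; rewrite inE; apply/orP; right; apply/existsP; exists j0; by rewrite ha0 hb.
  have c1 : #|S j0| + #|Y :\: S j0| = #|Y| by rewrite -(cardsID (S j0) Y) (setIidPr sY).
  have e1 : #|[set b | if (a == b) || [exists l, (a \in S l) && (b \in S l)]
                       then Some j0 != jf b else Some j0 == jf b]| <= #|Y :\: S j0|.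
    apply: subset_leq_card; apply/subsetP => b; rewrite !inE (eq_sym (Some j0)) jfP hT0 /=.
    case hb: (b \in S j0) => /=.
      rewrite (_ : [exists l, _] = true) ?orbT //; apply/existsP; exists j0; by rewrite ha0 hb.
    by case: ifP.
  rewrite (_ : [set q | _] = [set q : 'I_p * 'I_m | (a \in S q.1) && (q.1 != j0)]); last first.
    apply/setP => -[l k]; rewrite !inE /=.
    case hl: (a \in S l) => /=; first by rewrite eq_sym.
    by apply/eqP => -[el]; rewrite -el ha0 in hl.
  rewrite (@card_pairC _ _ (fun l => (a \in S l) && (l != j0))) card_ord.
  have c2 : deg S a = 1 + #|[set l | (a \in S l) && (l != j0)]|.
    rewrite /deg (cardsD1 j0) inE ha0 /=; congr (_ + _); apply: eq_card => l; rewrite !inE andbC //.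
  have e3 : #|[set b | Some j0 != jf b]| + 3 <= 3 * n.
    have : [set b | Some j0 != jf b] \subset ~: S j0.
      by apply/subsetP => b; rewrite !inE (eq_sym (Some j0)) jfP hT0.
    move/subset_leq_card => h1.
    have h2 : #|~: S j0| = 3*n - 3 by rewrite cardsCs setCK hS; congr (_ - _); exact: card_ord.
    have h3 : #|S j0| <= #|'I_(3*n)| := max_card _.
    rewrite hS card_ord in h3.
    by apply: leq_trans (leq_add h1 (leqnn 3)) _; rewrite h2 subnK.
  have cY : #|Y| = (cnb S a).+1 by rewrite Ycard.
  rewrite /tol c2; rewrite hS cY in c1.
  move: e1 e3 c1; set A1 := #|_|; set A2 := #|Y :\: _|; set A3 := #|[set l | _ & _]|.
  set A4 := #|[set b | Some j0 != _]|; set c := cnb S a. clear. move=> *. lia.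
- rewrite (_ : [set q : 'I_p * 'I_m | _] = set0) ?cards0 ?addn0; last first.
    apply/setP => -[l k]; rewrite !inE /=.
    case: (eqVneq j l) => [->|hl]; rewrite ?eqxx //=.
    by apply/eqP => -[el]; rewrite el eqxx in hl.
  case hj: (j \in T).
  + rewrite (_ : [set b | _] = set0) ?cards0 ?add0n; last first.
      apply/setP => b; rewrite !inE (eq_sym (Some j)) jfP hj /=.
      by case: (b \in S j); rewrite ?eqxx.
    have : [set b | Some j == jf b] \subset S j.
      by apply/subsetP => b; rewrite !inE (eq_sym (Some j)) jfP hj.
    move/subset_leq_card; rewrite hS /tol; move: #|[set b | Some j == jf b]| => A hA.
    lia.
  + rewrite (_ : [set b | Some j == jf b] = set0) ?cards0 ?addn0; last first.
      by apply/setP => b; rewrite !inE (eq_sym (Some j)) jfP hj.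
    have : [set b | if b \in S j then Some j != jf b else Some j == jf b] \subset S j.
      apply/subsetP => b; rewrite !inE (eq_sym (Some j)) jfP hj /=.
      by case: (b \in S j).
    move/subset_leq_card; rewrite hS /tol.
    move: #|[set b | if b \in S j then Some j != jf b else Some j == jf b]| => A hA.
    lia.
Qed.

End Fwd.
Section Bwd.
Variables (n p m : nat) (S : 'I_p -> {set 'I_(3 * n)}).
Hypothesis hS : forall i, #|S i| = 3.
Hypothesis hm : 6 * n + 3 * p <= m.
Hypothesis hp : 1 <= p.
Hypothesis hn : 1 <= n.
Variable P : {set {set Vx n p m}}.
Hypothesis herr : forall x, ((errors_at S P x)%:Z <= @tol n p m S x)%R.

Notation PL x := (@Pl n p m S x).
Definition bl (v : Vx n p m) := pblock P v.
Definition inC (C : {set Vx n p m}) := [set y : V2 n p m | C == bl (inr y)].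

Lemma errE x : errors_at S P x = #|PL x :\: inC (bl (inl x))| + #|inC (bl (inl x)) :\: PL x|.
Proof.
rewrite /errors_at -(cardsID (PL x)); congr (_ + _); apply: eq_card => y; rewrite !inE;
  rewrite /bl; case: plus_edge => /=; by rewrite ?andbT ?andbF.
Qed.

Lemma err_j_le j : errors_at S P (inr j) <= 3.
Proof. by have := herr (inr j); rewrite /tol lez_nat. Qed.

Definition good j := PL (inr j) \subset inC (bl (inl (inr j))).

Lemma ykv_inj l : injective (fun k : 'I_m => (inl (inr (l, k)) : V2 n p m)).
Proof. by move=> k1 k2 [->]. Qed.

Lemma pair_inj : injective (fun q : 'I_p * 'I_m => (inl (inr q) : V2 n p m)).
Proof. by move=> q1 q2 [->]. Qed.

Lemma cnb_lt a : cnb S a < 3 * n.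
Proof.
rewrite -Ycard.
have := max_card (mem [set b | (a == b) || [exists l, (a \in S l) && (b \in S l)]]).
by rewrite card_ord.
Qed.

Lemma deg_le a : deg S a <= p.
Proof. by have := max_card (mem [set j | a \in S j]); rewrite card_ord. Qed.

Lemma L2 a : exists2 j, a \in S j & good j.
Proof.
set C := bl (inl (inl a)).
have hA := herr (inl a); rewrite errE -/C /tol in hA.
have hPa := cardPa m S a.
have cY := cnb_lt a.
have dp := deg_le a.
case: (boolP [exists j, (a \in S j) && (bl (inl (inr j)) == C)]).
- move/existsP => [j /andP [ha /eqP hC]]; exists j => //; apply/negPn/negP => hng.
  have hJ := err_j_le j; rewrite errE hC in hJ.
  have A1 : 0 < #|PL (inr j) :\: inC C|.
    by rewrite /good hC -setD_eq0 in hng; rewrite card_gt0.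
  have i1 := cardsID (inC C) (PL (inl a)).
  have i2 : #|PL (inl a) :&: inC C| <= #|inC C| := subset_leq_card (subsetIr _ _).
  have i3 := cardsID (PL (inr j)) (inC C).
  have i4 := cardsID (inC C) (PL (inr j)).
  rewrite setIC in i3.
  have i5 := cardQ m hS j.
  move: hA hJ A1 i1 i2 i3 i4 i5 hPa cY dp hm.
  move: #|PL (inl a) :\: inC C| #|inC C :\: PL (inl a)| #|PL (inr j) :\: inC C|
        #|inC C :\: PL (inr j)| #|PL (inl a) :&: inC C| #|inC C| #|PL (inr j) :&: inC C|
        #|PL (inl a)| #|PL (inr j)| (cnb S a) (deg S a) => *.
  lia.
- move=> hno; exfalso.
  set Kset := [set q : 'I_p * 'I_m | (a \in S q.1) && (C == bl (inr (inl (inr q))))].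
  have hK : #|Kset| <= 3 * deg S a.
    rewrite card_pairT.
    apply: (@leq_trans (\sum_l (if a \in S l then 3 else 0))).
      apply: leq_sum => l _ /=. case hl: (a \in S l) => /=.
        have hj : bl (inl (inr l)) != C.
          by apply: contraNneq hno => e; apply/existsP; exists l; rewrite hl e eqxx.
        apply: leq_trans (err_j_le l); rewrite errE.
        apply: leq_trans (leq_addr _ _).
        rewrite -(card_imset _ (@ykv_inj l)); apply: subset_leq_card; apply/subsetP => y.
        move=> /imsetP [k]; rewrite inE => /eqP hk ->; rewrite !inE /= eqxx andbT -hk.
        exact: hj.
      by rewrite leqn0 cards_eq0; apply/eqP/setP => k; rewrite !inE.
    by rewrite -big_mkcond sum_nat_cond_const /deg mulnC.
  set Ka := [set q : 'I_p * 'I_m | a \in S q.1].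
  have hKa : #|Ka| = deg S a * m by rewrite (@card_pairC _ _ (fun l => a \in S l)) card_ord.
  have i1 := cardsID Kset Ka.
  have i2 : #|Ka :&: Kset| <= #|Kset| := subset_leq_card (subsetIr _ _).
  have i3 : #|Ka :\: Kset| <= #|PL (inl a) :\: inC C|.
    rewrite -(card_imset _ pair_inj); apply: subset_leq_card; apply/subsetP => y.
    move=> /imsetP [[l k]]; rewrite !inE /= => /andP [hnn hl] ->.
    by rewrite hl andbT; rewrite hl in hnn.
  move: hA hK hKa i1 i2 i3 cY dp hm.
  move: #|PL (inl a) :\: inC C| #|inC C :\: PL (inl a)| #|Kset| #|Ka| #|Ka :&: Kset|
        #|Ka :\: Kset| (cnb S a) (deg S a) => *.
  nia.
Qed.

Lemma L3 j l b : good j -> good l -> b \in S j -> b \in S l -> j = l.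
Proof.
move=> gj gl hj hl; apply/eqP/negPn/negP => hne.
have e1 : bl (inl (inr j)) = bl (inr (inl (inl b))).
  by apply/eqP; have := subsetP gj (inl (inl b)); rewrite !inE /=; apply.
have e2 : bl (inl (inr l)) = bl (inr (inl (inl b))).
  by apply/eqP; have := subsetP gl (inl (inl b)); rewrite !inE /=; apply.
have := err_j_le l; rewrite errE.
have : m <= #|inC (bl (inl (inr l))) :\: PL (inr l)|.
  rewrite -[X in X <= _](card_ord m) -(card_imset _ (@ykv_inj j)).
  apply: subset_leq_card; apply/subsetP => y /imsetP [k _ ->].
  rewrite !inE /= eq_sym hne /= e2 -e1.
  by have := subsetP gj (inl (inr (j, k))); rewrite !inE /= eqxx; apply.
move: hm hp hn; move: #|inC (bl (inl (inr l))) :\: PL (inr l)| #|PL (inr l) :\: inC (bl (inl (inr l)))|.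
clear; move=> *; lia.
Qed.

End Bwd.

Theorem corollary2 (n p m : nat) (S : 'I_p -> {set 'I_(3 * n)}) :
  (1 <= n)%N -> (1 <= p)%N ->
  (forall i, #|S i| = 3) -> injective S ->
  (6 * n + 3 * p <= m)%N ->
  (exists P : {set {set Vx n p m}},
      partition P [set: Vx n p m] /\
      forall x : V1 n p, ((@errors_at n p m S P x)%:Z <= @tol n p m S x)%R)
  <->
  (exists T : {set 'I_p}, forall u : 'I_(3 * n), #|[set j in T | u \in S j]| = 1).
Proof.
move=> hn hp hS _ hm; split.
- move=> [P [_ herr]].
  exists [set j | good S P j] => u.
  have [j0 hu0 hg0] := L2 hS hm hp hn herr u.
  rewrite (_ : [set j in _ | u \in S j] = [set j0]) ?cards1 //.
  apply/setP => j; rewrite !inE; apply/andP/eqP => [[gj hj]|->]; last by [].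
  exact: (L3 hm hp hn herr gj hg0 hj hu0).
- move=> [T hT].
  exists (preim_partition (flab S T) [set: Vx n p m]); split.
    exact: preim_partitionP.
  exact: (fwd_err m hS hT).
Qed.
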